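(* Let $P,K:\mathbb{N}_0\to\mathbb{N}_0$ be a scaling with $\lim_{n\to\infty}K_n^2/P_n=0$. Then $\beta(\theta_n)\sim\tau(\theta_n)$ as $n\to\infty$, where $\tau(\theta_n)=\frac{K_n^3}{P_n^2}+\left(\frac{K_n^2}{P_n}\right)^3$.
   Context: For positive integers $K\le P$, $\theta=(K,P)$: $q(\theta)=\binom{P-K}{K}/\binom{P}{K}$ if $2K\le P$ and $q(\theta)=0$ if $P<2K$; $r(\theta)=\binom{P-2K}{K}/\binom{P}{K}$ if $3K\le P$ and $r(\theta)=0$ if $P<3K$; $\beta(\theta)=(1-q(\theta))^3+q(\theta)^3-q(\theta)r(\theta)$ (this is the probability that three given nodes form a triangle in the random key graph in which each node receives a uniformly random $K$-subset of $\{1,\dots,P\}$ independently, and two nodes are adjacent iff their subsets intersect); $\tau(\theta)=K^3/P^2+(K^2/P)^3$. A scaling is a pair of functions $P,K:\mathbb{N}_0\to\mathbb{N}_0$ with $1\le K_n\le P_n$ for all $n$, and $\theta_n=(K_n,P_n)$. Asymptotic equivalence $a_n\sim b_n$ means $a_n/b_n\to1$. *)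

(* Defs.v *)
From Stdlib Require Import Reals Arith.
Open Scope R_scope.

(* Real-valued binomial coefficient: Stdlib's Binomial.C n k = n!/(k!(n-k)!),
   used only with k <= n below. *)

Definition q (K P : nat) : R :=
  if (2 * K <=? P)%nat then C (P - K) K / C P K else 0.

Definition r (K P : nat) : R :=
  if (3 * K <=? P)%nat then C (P - 2 * K) K / C P K else 0.

Definition beta (K P : nat) : R :=
  (1 - q K P) ^ 3 + q K P ^ 3 - q K P * r K P.

Definition tau (K P : nat) : R :=
  INR K ^ 3 / INR P ^ 2 + (INR K ^ 2 / INR P) ^ 3.

(* Main.v *)
Require Import Defs.
From Stdlib Require Import Reals Lra Lia Psatz Arith.
Open Scope R_scope.

Fixpoint g (P s k : nat) : R :=
  match k with
  | O => 1
  | S k' => g P s k' * (INR (P - s - k') / INR (P - k'))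
  end.

Lemma g_fact P s k : (s + k <= P)%nat ->
  g P s k = INR (fact (P - s)) * INR (fact (P - k)) /
            (INR (fact (P - s - k)) * INR (fact P)).
Proof.
  induction k as [|k IH]; intros H.
  - simpl. rewrite !Nat.sub_0_r.
    pose proof (INR_fact_neq_0 (P - s)). pose proof (INR_fact_neq_0 P). field; auto.
  - simpl g. rewrite IH by lia.
    assert (E1: (P - s - k = S (P - s - S k))%nat) by lia.
    assert (E2: (P - k = S (P - S k))%nat) by lia.
    rewrite E1, E2, !fact_simpl, !mult_INR.
    pose proof (INR_fact_neq_0 (P - s)). pose proof (INR_fact_neq_0 P).
    pose proof (INR_fact_neq_0 (P - s - S k)). pose proof (INR_fact_neq_0 (P - S k)).
    assert (INR (S (P - s - S k)) <> 0) by (apply not_0_INR; lia).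
    assert (INR (S (P - S k)) <> 0) by (apply not_0_INR; lia).
    field; repeat split; auto.
Qed.

Lemma q_g K P : (2 * K <= P)%nat -> q K P = g P K K.
Proof.
  intros H. unfold q. replace (2 * K <=? P)%nat with true by (symmetry; apply Nat.leb_le; auto).
  rewrite g_fact by lia. unfold C.
  pose proof (INR_fact_neq_0 (P - K)). pose proof (INR_fact_neq_0 P).
  pose proof (INR_fact_neq_0 (P - K - K)). pose proof (INR_fact_neq_0 K).
  field; repeat split; auto.
Qed.

Lemma r_g K P : (3 * K <= P)%nat -> r K P = g P (2 * K) K.
Proof.
  intros H. unfold r. replace (3 * K <=? P)%nat with true by (symmetry; apply Nat.leb_le; auto).
  rewrite g_fact by lia. unfold C.
  pose proof (INR_fact_neq_0 (P - K)). pose proof (INR_fact_neq_0 P).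
  pose proof (INR_fact_neq_0 (P - 2 * K - K)). pose proof (INR_fact_neq_0 K).
  pose proof (INR_fact_neq_0 (P - 2 * K)).
  field; repeat split; auto.
Qed.

Lemma div_nonneg a d : 0 <= a -> 0 < d -> 0 <= a / d.
Proof. intros. unfold Rdiv. apply Rmult_le_pos; [lra|]. left; apply Rinv_0_lt_compat; lra. Qed.
Lemma div_le1 a d : a <= d -> 0 < d -> a / d <= 1.
Proof. intros. apply Rmult_le_reg_r with d; [lra|]. unfold Rdiv. rewrite Rmult_assoc, Rinv_l by lra. lra. Qed.

Lemma fac P s i : (1 <= s)%nat -> (s + i < P)%nat ->
  INR (P - s - i) / INR (P - i) = 1 - INR s / (INR P - INR i) /\
  0 <= INR (P - s - i) / INR (P - i) <= 1 /\ 0 < INR P - INR i.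
Proof.
  intros H1 H2.
  assert (Hp: 0 < INR (P - i)) by (apply lt_0_INR; lia).
  assert (Hle: INR (P - s - i) <= INR (P - i)) by (apply le_INR; lia).
  pose proof (pos_INR (P - s - i)).
  rewrite (minus_INR P i) in * by lia.
  split; [|split; [split|]].
  - rewrite !minus_INR by lia. field. lra.
  - apply div_nonneg; lra.
  - apply div_le1; lra.
  - lra.
Qed.

Lemma g_lower P s k0 : (1 <= s)%nat -> (s + k0 <= P)%nat -> (k0 < P)%nat ->
  forall k, (k <= k0)%nat ->
  0 <= g P s k <= 1 /\ 1 - INR k * (INR s / (INR P - INR k0)) <= g P s k.
Proof.
  intros Hs Hsk Hk0. induction k as [|k IH]; intros Hk.
  - simpl. lra.
  - destruct IH as [[G0 G1] GL]; [lia|].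
    destruct (fac P s k Hs ltac:(lia)) as [Ht [[T0 T1] Hd]].
    simpl g. set (t := INR (P - s - k) / INR (P - k)) in *.
    assert (Hk0r : INR k < INR k0) by (apply lt_INR; lia).
    assert (HP : INR k0 < INR P) by (apply lt_INR; lia).
    assert (Hal : INR s / (INR P - INR k) <= INR s / (INR P - INR k0)).
    { unfold Rdiv. apply Rmult_le_compat_l; [apply pos_INR|].
      apply Rinv_le_contravar; lra. }
    rewrite S_INR. set (al := INR s / (INR P - INR k0)) in *.
    split; [split|].
    + apply Rmult_le_pos; lra.
    + nra.
    + assert (g P s k * (1 - t) <= 1 - t) by nra. nra.
Qed.

Lemma g_upper P s : (1 <= s)%nat -> forall k, (s + k <= P)%nat ->
  g P s k <= (1 - INR s / INR P) ^ k.
Proof.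
  intros Hs. induction k as [|k IH]; intros Hk.
  - simpl. lra.
  - destruct (fac P s k Hs ltac:(lia)) as [Ht [[T0 T1] Hd]].
    assert (G := g_lower P s k Hs ltac:(lia) ltac:(lia) k (le_n _)).
    simpl g. simpl pow. rewrite Ht in *.
    assert (INR s / INR P <= INR s / (INR P - INR k)).
    { unfold Rdiv. apply Rmult_le_compat_l; [apply pos_INR|].
      apply Rinv_le_contravar; [lra|]. pose proof (pos_INR k). lra. }
    specialize (IH ltac:(lia)). nra.
Qed.

Lemma bern n w : 0 <= w <= 1 -> (1 - w) ^ n * (1 + INR n * w) <= 1.
Proof.
  intros Hw. induction n as [|n IH].
  - simpl. lra.
  - rewrite S_INR. simpl pow.
    assert (X0 : 0 <= (1 - w) ^ n) by (apply pow_le; lra).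
    pose proof (pos_INR n).
    assert (0 <= (1-w)^n * (w * w * (1 + INR n))) by (apply Rmult_le_pos; nra).
    nra.
Qed.

Lemma D_bounds P K : (1 <= K)%nat -> (3 * K <= P)%nat -> forall n, (n <= K)%nat ->
  let clo := INR K ^ 2 / INR P ^ 2 in
  let chi := INR K ^ 2 / (INR P - INR K) ^ 2 in
  g P (2 * K) n * INR n * clo <= g P K n ^ 2 - g P (2 * K) n /\
  g P K n ^ 2 - g P (2 * K) n <= INR n * chi.
Proof.
  intros HK HP. induction n as [|n IH]; intros Hn clo chi.
  - simpl. lra.
  - destruct IH as [IL IU]; [lia|]. fold clo in IL. fold chi in IU.
    destruct (fac P K n ltac:(lia) ltac:(lia)) as [Ha [[A0 A1] Hd]].
    destruct (fac P (2*K) n ltac:(lia) ltac:(lia)) as [Hb [[B0 B1] _]].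
    destruct (g_lower P (2*K) K ltac:(lia) ltac:(lia) ltac:(lia) n ltac:(lia)) as [[BB0 BB1] _].
    change (g P K (S n)) with (g P K n * (INR (P - K - n) / INR (P - n))).
    change (g P (2*K) (S n)) with (g P (2*K) n * (INR (P - 2*K - n) / INR (P - n))).
    rewrite S_INR.
    set (a := INR (P - K - n) / INR (P - n)) in *.
    set (b' := INR (P - 2 * K - n) / INR (P - n)) in *.
    set (G := g P K n) in *. set (B := g P (2*K) n) in *.
    rewrite mult_INR in Hb. simpl (INR 2) in Hb.
    set (c := INR K ^ 2 / (INR P - INR n) ^ 2).
    assert (Hab : a ^ 2 = b' + c).
    { rewrite Ha, Hb. unfold c. field. lra. }
    assert (Hkr : INR n < INR K) by (apply lt_INR; lia).
    assert (HKP : 3 * INR K <= INR P).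
    { replace 3 with (INR 3) by (simpl; lra). rewrite <- mult_INR. apply le_INR; lia. }
    pose proof (pos_INR n).
    assert (Hc1 : clo <= c).
    { unfold clo, c, Rdiv. apply Rmult_le_compat_l; [nra|].
      apply Rinv_le_contravar; nra. }
    assert (Hc2 : c <= chi).
    { unfold chi, c, Rdiv. apply Rmult_le_compat_l; [nra|].
      apply Rinv_le_contravar; nra. }
    assert (Hclo : 0 <= clo).
    { unfold clo. apply div_nonneg; [nra|]. nra. }
    assert (E : (G * a) ^ 2 - B * b' = (G ^ 2 - B) * a ^ 2 + B * c).
    { rewrite <- (Rmult_1_r (B*b')). replace ((G * a) ^ 2) with (G^2 * a^2) by ring.
      rewrite Hab. ring. }
    rewrite E. split.
    + assert (a ^ 2 <= 1) by nra.
      assert (B * INR n * clo * b' <= (G ^ 2 - B) * a ^ 2).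
      { apply Rle_trans with (B * INR n * clo * a ^ 2).
        - apply Rmult_le_compat_l; [|nra]. apply Rmult_le_pos; [|lra]. apply Rmult_le_pos; lra.
        - apply Rmult_le_compat_r; [nra|]. lra. }
      assert (B * b' * clo <= B * c).
      { apply Rle_trans with (B * clo).
        - assert (0 <= B * clo) by (apply Rmult_le_pos; lra). nra.
        - apply Rmult_le_compat_l; lra. }
      nra.
    + assert (a ^ 2 <= 1) by nra.
      assert (0 <= G ^ 2 - B) by (apply Rle_trans with (B * INR n * clo); [|lra];
        apply Rmult_le_pos; [|lra]; apply Rmult_le_pos; lra).
      assert ((G ^ 2 - B) * a ^ 2 <= G ^ 2 - B) by nra.
      assert (B * c <= chi) by nra.
      nra.
Qed.

Lemma core_abs (x e y q r D : R) :
  0 < x -> x <= 1/10 -> 1 <= e -> e <= 1 + 10/9 * x -> 0 < y ->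
  0 <= q <= 1 -> q * (1 + x) <= 1 -> 1 - x * e <= q -> 1 - 2 * x * e <= r ->
  r * y <= D -> D <= y * e ^ 2 ->
  (1 - 5 * x) * (y + x ^ 3) <= (1 - q) ^ 3 + q * D <= (1 + 5 * x) * (y + x ^ 3).
Proof.
  intros Hx0 Hx1 He0 He1 Hy Hq Hqu Hql Hrl HDl HDu.
  set (u := 1 - q).
  assert (Hu1 : x - x * x <= u).
  { unfold u. assert (q <= 1 - x + x * x) by nra. lra. }
  assert (Hu2 : u <= x * e) by (unfold u; lra).
  assert (Hxx : 0 <= x - x * x) by nra.
  assert (Hu3l : x ^ 3 * (1 - 3 * x) <= u ^ 3).
  { apply Rle_trans with ((x - x*x)^3).
    - replace ((x - x*x)^3) with (x^3 * (1-x)^3) by ring.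
      apply Rmult_le_compat_l; [nra|]. nra.
    - apply pow_incr; lra. }
  assert (Hu3u : u ^ 3 <= x ^ 3 * (1 + 5 * x)).
  { apply Rle_trans with ((x * e)^3).
    - apply pow_incr; nra.
    - replace ((x*e)^3) with (x^3 * e^3) by ring.
      apply Rmult_le_compat_l; [nra|].
      apply Rle_trans with ((1 + 10/9*x)^3); [apply pow_incr; lra|]. nra. }
  assert (Hxe : x * e <= 1/9) by nra.
  assert (Hqr : 1 - 4 * x <= q * r).
  { apply Rle_trans with ((1 - x*e) * (1 - 2*x*e)).
    - nra.
    - apply Rmult_le_compat; nra. }
  assert (HD0 : 0 <= D) by nra.
  assert (HqD1 : (1 - 4 * x) * y <= q * D).
  { apply Rle_trans with (q * r * y); [nra|].
    rewrite Rmult_assoc. apply Rmult_le_compat_l; lra. }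
  assert (HqD2 : q * D <= (1 + 5 * x) * y).
  { apply Rle_trans with D; [nra|]. apply Rle_trans with (y * e ^ 2); [lra|].
    assert (e ^ 2 <= 1 + 5 * x).
    { apply Rle_trans with ((1 + 10/9*x)^2); [apply pow_incr; lra|]. nra. }
    nra. }
  split; nra.
Qed.

Lemma point K P : (1 <= K)%nat -> (K <= P)%nat -> INR K ^ 2 / INR P <= 1/10 ->
  Rabs (beta K P / tau K P - 1) <= 5 * (INR K ^ 2 / INR P).
Proof.
  intros HK HKP Hx.
  set (k := INR K) in *. set (p := INR P) in *.
  assert (Hk : 1 <= k) by (unfold k; replace 1 with (INR 1) by reflexivity; apply le_INR; lia).
  assert (Hkp : k <= p) by (apply le_INR; lia).
  assert (Hp : 0 < p) by lra.
  set (x := k ^ 2 / p) in *.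
  assert (Hxp : x * p = k ^ 2) by (unfold x; field; lra).
  assert (Hx0 : 0 < x) by (unfold x; apply Rdiv_lt_0_compat; nra).
  assert (H3 : (3 * K <= P)%nat).
  { apply INR_le. rewrite mult_INR. fold k p. simpl (INR 3). nra. }
  set (w := k / p).
  assert (Hwp : w * p = k) by (unfold w; field; lra).
  assert (Hwx : x = k * w) by (unfold x, w; field; lra).
  assert (Hw0 : 0 < w) by (unfold w; apply Rdiv_lt_0_compat; lra).
  assert (Hwx2 : w <= x) by nra.
  assert (Hpk : 0 < p - k) by nra.
  set (e := p / (p - k)).
  assert (He : e * (1 - w) = 1) by (unfold e, w; field; lra).
  assert (He0 : 1 <= e) by nra.
  assert (He1 : e <= 1 + 10/9 * x).
  { assert (e <= 10/9) by nra. nra. }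
  set (y := k ^ 3 / p ^ 2).
  assert (Hy : 0 < y) by (unfold y; apply Rdiv_lt_0_compat; nra).
  destruct (g_lower P K K HK ltac:(lia) ltac:(lia) K (le_n _)) as [[Q0 Q1] QL].
  destruct (g_lower P (2*K) K ltac:(lia) ltac:(lia) ltac:(lia) K (le_n _)) as [[R0 R1] RL].
  pose proof (g_upper P K HK K ltac:(lia)) as QU.
  pose proof (bern K w ltac:(split; nra)) as BE.
  destruct (D_bounds P K HK H3 K (le_n _)) as [DL DU].
  fold k p in QL, RL, QU, BE, DL, DU.
  rewrite mult_INR in RL. simpl (INR 2) in RL. fold k in RL.
  set (qv := g P K K) in *. set (rv := g P (2*K) K) in *.
  assert (E1 : k * (k / (p - k)) = x * e) by (unfold x, e; field; lra).
  assert (E2 : k * ((1 + 1) * k / (p - k)) = 2 * x * e) by (unfold x, e; field; lra).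
  assert (E3 : rv * k * (k ^ 2 / p ^ 2) = rv * y) by (unfold y; field; lra).
  assert (E4 : k * (k ^ 2 / (p - k) ^ 2) = y * e ^ 2) by (unfold y, e; field; lra).
  rewrite E1 in QL. rewrite E2 in RL. rewrite E3 in DL. rewrite E4 in DU.
  fold w in QU. rewrite <- Hwx in BE.
  assert (Hqu : qv * (1 + x) <= 1).
  { apply Rle_trans with ((1 - w) ^ K * (1 + x)); [|exact BE].
    apply Rmult_le_compat_r; lra. }
  destruct (core_abs x e y qv rv (qv ^ 2 - rv) Hx0 Hx ltac:(lra) He1 Hy ltac:(lra)
              Hqu QL RL DL DU) as [L U].
  assert (Eb : beta K P = (1 - qv) ^ 3 + qv * (qv ^ 2 - rv)).
  { unfold beta. rewrite (q_g K P) by lia. rewrite (r_g K P) by lia. fold qv rv. ring. }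
  assert (Et : tau K P = y + x ^ 3) by reflexivity.
  rewrite Eb, Et.
  set (bb := (1 - qv) ^ 3 + qv * (qv ^ 2 - rv)) in *.
  assert (Ht : 0 < y + x ^ 3) by nra.
  apply Rabs_le. split.
  - apply Rmult_le_reg_r with (y + x ^ 3); [lra|].
    replace ((bb / (y + x ^ 3) - 1) * (y + x ^ 3)) with (bb - (y + x^3)) by (field; lra).
    nra.
  - apply Rmult_le_reg_r with (y + x ^ 3); [lra|].
    replace ((bb / (y + x ^ 3) - 1) * (y + x ^ 3)) with (bb - (y + x^3)) by (field; lra).
    nra.
Qed.

Theorem proposition3 (K P : nat -> nat)
  (hscale : forall n, (1 <= K n)%nat /\ (K n <= P n)%nat)
  (hlim : Un_cv (fun n => INR (K n) ^ 2 / INR (P n)) 0) :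
  Un_cv (fun n => beta (K n) (P n) / tau (K n) (P n)) 1.
Proof.
  intros eps Heps.
  destruct (hlim (Rmin (1/10) (eps/10))) as [N HN].
  { apply Rmin_pos; lra. }
  exists N. intros n Hn. specialize (HN n Hn).
  unfold R_dist in *. rewrite Rminus_0_r in HN.
  destruct (hscale n) as [H1 H2].
  pose proof (Rmin_l (1/10) (eps/10)). pose proof (Rmin_r (1/10) (eps/10)).
  apply Rabs_def2 in HN. destruct HN as [HN1 HN2].
  pose proof (point (K n) (P n) H1 H2 ltac:(lra)). lra.
Qed.
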